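(* Let $N\ge 1$, let $x_1,\dots,x_{2N-2}\in\mathbb{C}$ and let $z_1,\dots,z_N\in\mathbb{C}$ be pairwise distinct and distinct from all $x_i$. Then $$\sum_{r=1}^N\Big(\prod_{i=1}^{2N-2}(z_r-x_i)\Big)\Big(\prod_{s=1,\,s\ne r}^N\frac{1}{(z_r-z_s)^2}\Big)\Big[\sum_{i=1}^{2N-2}\frac{1}{z_r-x_i}-\sum_{s=1,\,s\ne r}^N\frac{2}{z_r-z_s}\Big]=0 .$$ *)

(* Defs.v *)
From HB Require Import structures.
From mathcomp Require Import all_boot all_order all_algebra.
From mathcomp Require Import complex.
From mathcomp Require Import Rstruct.
Set Implicit Arguments. Unset Strict Implicit. Unset Printing Implicit Defensive.
Import Order.TTheory GRing.Theory Num.Theory.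
Local Open Scope ring_scope.

Definition CC : Type := complex Rdefinitions.R.

(* Main.v *)
Require Import Defs.
From HB Require Import structures.
From mathcomp Require Import all_boot all_order all_algebra.
From mathcomp Require Import complex.
From mathcomp Require Import Rstruct.
From mathcomp Require Import ring zify.
Import GRing.Theory Num.Theory.
Local Open Scope ring_scope.
Lemma dermul (F : fieldType) (f g : {poly F}) t :
  (f * g)^`().[t] = f^`().[t] * g.[t] + f.[t] * g^`().[t].
Proof. by rewrite derivM hornerD !hornerM. Qed.

Lemma logder (F : fieldType) (I : Type) (r : seq I) (p : pred I) (a : I -> F) t :
  (forall i, p i -> t != a i) ->
  (\prod_(i <- r | p i) ('X - (a i)%:P))^`().[t] =
  (\prod_(i <- r | p i) ('X - (a i)%:P)).[t] * \sum_(i <- r | p i) (t - a i)^-1.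
Proof.
move=> H; elim: r => [|i r IH]; first by rewrite !big_nil derivC hornerC mulr0.
rewrite !big_cons; case: ifP => pi //.
rewrite dermul IH derivXsubC hornerC hornerM hornerXsubC.
have hn : t - a i != 0 by rewrite subr_eq0 H.
by field.
Qed.

Lemma dstep (F : fieldType) (p : {poly F}) w :
  p.[w] = 0 -> p^`().[w] = 0 -> exists r, p = r * ('X - w%:P) ^+ 2.
Proof.
move=> h0 h1; have /factor_theorem [r1 Hr1] : root p w by apply/rootP.
move: h1; rewrite Hr1 dermul derivXsubC hornerXsubC subrr mulr0 hornerC mulr1 add0r.
move=> h1; have /factor_theorem [r2 Hr2] : root r1 w by apply/rootP.
by exists r2; rewrite Hr2 expr2 mulrA.
Qed.

Lemma dfactor (F : fieldType) (p : {poly F}) (s : seq F) :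
  uniq s -> (forall w, w \in s -> p.[w] = 0 /\ p^`().[w] = 0) ->
  exists r, p = r * (\prod_(w <- s) ('X - w%:P)) ^+ 2.
Proof.
elim: s p => [|w s IH] p /=.
  by move=> _ _; exists p; rewrite big_nil expr1n mulr1.
case/andP=> ws us H.
have [r Hr] := IH p us (fun v hv => H v (@mem_behead _ (w :: s) v hv)).
set D := \prod_(v <- s) ('X - v%:P) in Hr.
have hD : D.[w] != 0.
  rewrite /D horner_prod prodf_seq_neq0; apply/allP => v vs /=.
  by rewrite hornerXsubC subr_eq0; apply/eqP => ewv; move: ws; rewrite ewv vs.
have [h0 h1] := H w (mem_head _ _).
have r0 : r.[w] = 0.
  move: h0; rewrite Hr hornerM horner_exp => /eqP; rewrite mulf_eq0 expf_eq0 (negPf hD) andbF orbF.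
  by move/eqP.
have r1 : r^`().[w] = 0.
  move: h1; rewrite Hr dermul r0 mul0r addr0 horner_exp => /eqP.
  by rewrite mulf_eq0 expf_eq0 (negPf hD) andbF orbF => /eqP.
have [r2 Hr2] := @dstep F r w r0 r1.
by exists r2; rewrite Hr Hr2 big_cons -mulrA -exprMn.
Qed.

Lemma dunique (F : fieldType) (p : {poly F}) (s : seq F) :
  uniq s -> (size p <= (size s).*2)%N ->
  (forall w, w \in s -> p.[w] = 0 /\ p^`().[w] = 0) -> p = 0.
Proof.
move=> us hs H; have [r Hr] := @dfactor _ p s us H.
have [r0|rn] := eqVneq r 0; first by rewrite Hr r0 mul0r.
have mD : (\prod_(w <- s) ('X - w%:P)) ^+ 2 \is monic by apply/monic_exp/monic_prod_XsubC.
have szD : size ((\prod_(w <- s) ('X - w%:P)) ^+ 2) = ((size s).*2).+1.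
  have sD : size (\prod_(w <- s) ('X - w%:P)) = (size s).+1 := size_prod_XsubC s (fun w : F => w).
  rewrite expr2 size_monicM ?monic_prod_XsubC ?monic_neq0 ?monic_prod_XsubC // sD.
  by rewrite addSn addnS -addnn.
move: hs; rewrite Hr size_Mmonic // szD.
have : (0 < size r)%N by rewrite lt0n size_poly_eq0.
by case: (size r) => // n _; rewrite addSn /= addnS ltnNge leq_addl.
Qed.
Lemma gen (F : fieldType) (N : nat) (x : 'I_(2 * N - 2) -> F) (z : 'I_N -> F) :
  (1 <= N)%N ->
  injective z ->
  (forall r i, z r != x i) ->
  \sum_(r < N)
     (\prod_(i < 2 * N - 2) (z r - x i)) *
     (\prod_(s < N | s != r) ((z r - z s) ^+ 2)^-1) *
     (\sum_(i < 2 * N - 2) (z r - x i)^-1 -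
      \sum_(s < N | s != r) 2 / (z r - z s)) = 0.
Proof.
move=> N1 zinj zx.
set M := (2 * N - 2)%N.
pose P : {poly F} := \prod_(i < M) ('X - (x i)%:P).
pose q r : {poly F} := \prod_(s < N | s != r) ('X - (z s)%:P).
pose qv r := \prod_(s < N | s != r) (z r - z s).
pose LP r := \sum_(i < M) (z r - x i)^-1.
pose LQ r := \sum_(s < N | s != r) (z r - z s)^-1.
have qvn r : qv r != 0.
  apply/prodf_neq0 => s sr; rewrite subr_eq0; apply/eqP => e.
  by move: sr; rewrite (zinj _ _ e) eqxx.
have Pz r : P.[z r] = \prod_(i < M) (z r - x i).
  by rewrite horner_prod; apply: eq_bigr => i _; rewrite hornerXsubC.
have P'z r : P^`().[z r] = P.[z r] * LP r.
  by apply: logder => i _; apply: zx.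
have qz r : (q r).[z r] = qv r.
  by rewrite horner_prod; apply: eq_bigr => i _; rewrite hornerXsubC.
have q'z r : (q r)^`().[z r] = qv r * LQ r.
  rewrite /q logder -/(q r) ?qz // => s sr; rewrite eq_sym; apply/eqP => e.
  by move: sr; rewrite (zinj _ _ e) eqxx.
have qzj r j : j != r -> (q r).[z j] = 0.
  by move=> jr; rewrite horner_prod (bigD1 j) //= hornerXsubC subrr mul0r.
have monq r : q r \is monic by apply: monic_prod_XsubC.
have szq r : size (q r) = N.
  have e : \prod_(s < N) ('X - (z s)%:P) = ('X - (z r)%:P) * q r.
    by rewrite (bigD1 r).
  have := size_prod_XsubC (index_enum 'I_N) z.
  rewrite e size_monicM ?monicXsubC ?monic_neq0 // size_XsubC.
  rewrite [index_enum _]unlock -enumT size_enum_ord /=. by move=> [].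
pose A r := P.[z r] / qv r ^+ 2.
pose B r := (\prod_(i < M) (z r - x i)) *
     (\prod_(s < N | s != r) ((z r - z s) ^+ 2)^-1) *
     (\sum_(i < M) (z r - x i)^-1 -
      \sum_(s < N | s != r) 2 / (z r - z s)).
have Bre r : B r = P.[z r] / qv r ^+ 2 * (LP r - 2 * LQ r).
  rewrite /B Pz prodfV prodrXl -/(qv r); congr (_ * (_ - _)).
  by rewrite /LQ mulr_sumr.
pose H := \sum_(r < N) (A r *: (q r) ^+ 2 + B r *: (('X - (z r)%:P) * (q r) ^+ 2)).
have sz1 r : size ((q r) ^+ 2) = (2 * N - 1)%N.
  rewrite expr2 size_monicM ?monic_neq0 // szq; lia.
have mon2 r : ('X - (z r)%:P) * (q r) ^+ 2 \is monic.
  by rewrite monicMl ?monicXsubC // monic_exp.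
have sz2 r : size (('X - (z r)%:P) * (q r) ^+ 2) = (2 * N)%N.
  rewrite size_monicM ?monicXsubC ?monic_neq0 ?monic_exp // size_XsubC sz1; lia.
have szP : size P = (2 * N - 1)%N.
  have si : size (index_enum 'I_M) = M by rewrite [index_enum _]unlock -enumT size_enum_ord.
  rewrite /P size_prod_XsubC si /M; lia.
have szH : (size H <= 2 * N)%N.
  apply: (big_ind (fun p : {poly F} => (size p <= 2 * N)%N)).
  - by rewrite size_poly0.
  - by move=> p1 p2 h1 h2; apply: leq_trans (size_polyD _ _) _; rewrite geq_max h1 h2.
  move=> r _; apply: leq_trans (size_polyD _ _) _; rewrite geq_max.
  apply/andP; split; apply: leq_trans (size_scale_leq _ _) _; rewrite ?sz1 ?sz2 //; lia.
have Hz j : H.[z j] = P.[z j].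
  rewrite /H horner_sum (bigD1 j) //= big1 => [|r rj].
    rewrite addr0 hornerD !hornerZ horner_exp hornerM hornerXsubC subrr mul0r mulr0 addr0.
    rewrite qz /A divfK //; exact: expf_neq0.
  have jr : j != r by rewrite eq_sym.
  by rewrite hornerD !hornerZ horner_exp hornerM horner_exp qzj // expr0n /= !mulr0 addr0.
have H'z j : H^`().[z j] = P^`().[z j].
  rewrite /H (big_morph _ (@derivD F) (@deriv0 F)) horner_sum (bigD1 j) //= big1 => [|r rj].
    rewrite addr0 derivD !derivZ hornerD !hornerZ (@dermul F ('X - (z j)%:P)) derivXsubC hornerC.
    rewrite hornerXsubC subrr mul0r addr0 mul1r horner_exp expr2 dermul qz q'z.
    rewrite Bre P'z /A; field; exact: qvn.
  have jr : j != r by rewrite eq_sym.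
  rewrite derivD !derivZ hornerD !hornerZ dermul !expr2 !dermul hornerM qzj //.
  by rewrite !(mulr0, mul0r, addr0).
have PH : P - H = 0.
  apply: (@dunique F (P - H) (map z (enum 'I_N))).
  - by rewrite map_inj_uniq ?enum_uniq.
  - rewrite size_map size_enum_ord; apply: leq_trans (size_polyD _ _) _.
    rewrite size_polyN geq_max szP; apply/andP; split; last by rewrite -muln2 mulnC. rewrite -muln2; lia.
  move=> w /mapP [j _ ->]; split.
    by rewrite hornerD hornerN Hz subrr.
  by rewrite derivB hornerD hornerN H'z subrr.
have := congr1 (fun p : {poly F} => p`_(2 * N - 1)) PH.
rewrite /= coefB coef0 coef_sum nth_default ?szP // sub0r => /eqP; rewrite oppr_eq0 => /eqP e; apply: etrans e.
apply: eq_bigr => r _; rewrite coefD !coefZ nth_default ?sz1 // mulr0 add0r.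
have -> : (2 * N - 1)%N = (size (('X - (z r)%:P) * q r ^+ 2)).-1 by rewrite sz2; lia.
by rewrite -lead_coefE (monicP (mon2 r)) mulr1.
Qed.

Theorem mainTheorem3 (N : nat) (x : 'I_(2 * N - 2) -> CC) (z : 'I_N -> CC) :
  (1 <= N)%N ->
  injective z ->
  (forall r i, z r != x i) ->
  \sum_(r < N)
     (\prod_(i < 2 * N - 2) (z r - x i)) *
     (\prod_(s < N | s != r) ((z r - z s) ^+ 2)^-1) *
     (\sum_(i < 2 * N - 2) (z r - x i)^-1 -
      \sum_(s < N | s != r) 2 / (z r - z s)) = 0.
Proof. exact: (@gen _ N x z). Qed.
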